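(* Let $\check\lambda\in Y$ and let $a$ be a simple root with simple coroot $\check a$, and write $m=n(\check a)$. Then, for the operator $\widetilde{\mathbf{T}}_a$ on $\mathbb{Z}_{\tau,\mathbb{g}}[Y]$ defined below: (1) If $\langle\check\lambda+\check\rho,a\rangle\ge0$ and $\langle\check\lambda+\check\rho,a\rangle\equiv0\bmod m$, then $(Y_{\check\lambda}+Y_{\check\lambda\bullet s_a})\widetilde{\mathbf{T}}_a=-(Y_{\check\lambda}+Y_{\check\lambda\bullet s_a})$. (2) If $0<\langle\check\lambda+\check\rho,a\rangle<m$, then, with $g=\mathbb{g}_{\langle\check\lambda+\check\rho,a\rangle\mathsf{Q}(\check a)}$, $(Y_{\check\lambda}-g\,Y_{\check\lambda\bullet s_a})\widetilde{\mathbf{T}}_a=-(Y_{\check\lambda}-g\,Y_{\check\lambda\bullet s_a})$. (3) If $j:=\langle\check\lambda+\check\rho,a\rangle>m$ and $j\not\equiv0\bmod m$, then setting $\check\lambda^{(1)}=\check\lambda-\mathrm{res}_m(j)\,\check a$ and $g=\mathbb{g}_{j\mathsf{Q}(\check a)}$, the element $u=Y_{\check\lambda}-g\,Y_{\check\lambda\bullet s_a}-g\,Y_{\check\lambda^{(1)}}+Y_{\check\lambda^{(1)}\bullet s_a}$ satisfies $u\,\widetilde{\mathbf{T}}_a=-u$.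
   Context: Let $(Y,\{\check a_i\}_{i\in I},X,\{a_i\}_{i\in I})$ be a root datum with finite-type Cartan matrix $(a_{ij})$, i.e. $Y,X$ are dual lattices with $\langle\check a_i,a_j\rangle=a_{ij}$. The Weyl group $W$ acts on $Y$ (written on the right) by $\check\lambda\cdot s_i=\check\lambda-\langle\check\lambda,a_i\rangle\check a_i$. Let $\check\rho\in Y\otimes\mathbb{Q}$ be half the sum of the positive coroots, so $\langle\check\rho,a_i\rangle=1$; for a simple root $a$ set $\check\lambda\bullet s_a=\check\lambda-\langle\check\lambda+\check\rho,a\rangle\check a\in Y$. Fix an integer $n\ge1$ and a $W$-invariant $\mathbb{Z}$-valued quadratic form $\mathsf{Q}$ on $Y$; for a simple coroot $\check a$, $n(\check a)$ is the smallest positive integer with $n(\check a)\mathsf{Q}(\check a)\equiv0\bmod n$. (Standing assumption: the associated twisted root datum is simply connected.) For a positive integer $m$, $\mathrm{res}_m:\mathbb{Z}\to\{0,\dots,m-1\}$ is the residue map. Let $\mathbb{Z}_{\tau,\mathbb{g}}=\mathbb{Z}[\tau^{\pm1},\{\mathbb{g}_k\}_{k\in\mathbb{Z}}]$ modulo the relations $\mathbb{g}_k=\mathbb{g}_l$ if $k\equiv l\bmod n$, $\mathbb{g}_k\mathbb{g}_{-k}=\tau^2$ if $k\not\equiv0\bmod n$, and $\mathbb{g}_0=-1$. In the group algebra $\mathbb{Z}_{\tau,\mathbb{g}}[Y]$ (basis $Y_{\check\mu}$, $\check\mu\in Y$), define the $\mathbb{Z}_{\tau,\mathbb{g}}$-linear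 operator $\widetilde{\mathbf{T}}_a$ (written on the right), for $m=n(\check a)$, by $Y_{\check\lambda}\widetilde{\mathbf{T}}_a=\mathbb{g}_{\langle\check\lambda+\check\rho,a\rangle\mathsf{Q}(\check a)}Y_{\check\lambda\bullet s_a}+(\tau^2-1)\sum_{k\ge0,\ km\le\langle\check\lambda,a\rangle}Y_{\check\lambda-km\check a}$ if $\langle\check\lambda,a\rangle\ge0$, and $Y_{\check\lambda}\widetilde{\mathbf{T}}_a=\mathbb{g}_{\langle\check\lambda+\check\rho,a\rangle\mathsf{Q}(\check a)}Y_{\check\lambda\bullet s_a}+(1-\tau^2)\sum_{k>0,\ km<-\langle\check\lambda,a\rangle}Y_{\check\lambda+km\check a}$ if $\langle\check\lambda,a\rangle<0$ (the metaplectic Demazure–Lusztig operator). *)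

(* Defs.v *)
From HB Require Import structures.
From mathcomp Require Import all_boot all_order all_algebra.
From mathcomp Require Import finmap.
From mathcomp.multinomials Require Import monalg.

Set Implicit Arguments.
Unset Strict Implicit.
Unset Printing Implicit Defensive.

Import Order.TTheory GRing.Theory Num.Theory.
Local Open Scope ring_scope.

(* Root datum.  The cocharacter lattice Y is Z^r (row vectors), the     *)
(* character lattice X is Z^r as well, dual to Y via the standard       *)
(* perfect pairing <y, x> = sum_k y_k x_k.                               *)

Definition lat (r : nat) := 'rV[int]_r.

Definition dpair (r : nat) (y x : lat r) : int := (y *m x^T) 0 0.

Definition sref (r : nat) (ac al : lat r) (y : lat r) : lat r :=
  y - dpair y al *: ac.

Definition cartan (r : nat) (I : finType) (ac al : I -> lat r) (i j : I) : int :=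
  dpair (ac i) (al j).

Definition finite_type_cartan (I : finType) (A : I -> I -> int) : Prop :=
  [/\ (forall i, A i i = 2),
      (forall i j, i != j -> A i j <= 0),
      (forall i j, A i j = 0 <-> A j i = 0) &
      exists d : I -> rat,
        [/\ (forall i, 0 < d i),
            (forall i j, d i * (A i j)%:~R = d j * (A j i)%:~R) &
            (forall v : I -> rat, (exists i, v i != 0) ->
               0 < \sum_(i : I) \sum_(j : I) v i * d i * (A i j)%:~R * v j)]].

Definition bilQ (r : nat) (Q : lat r -> int) (y z : lat r) : int :=
  Q (y + z) - Q y - Q z.

Definition quadratic_form (r : nat) (Q : lat r -> int) : Prop :=
  (forall (k : int) (y : lat r), Q (k *: y) = k ^+ 2 * Q y) /\
  (forall y1 y2 z : lat r, bilQ Q (y1 + y2) z = bilQ Q y1 z + bilQ Q y2 z).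

(* W-invariance (W is generated by the simple reflections) *)
Definition W_invariant (r : nat) (I : finType) (ac al : I -> lat r)
  (Q : lat r -> int) : Prop :=
  forall (i : I) (y : lat r), Q (sref (ac i) (al i) y) = Q y.

(* n(a^vee): smallest positive integer m with m Q(a^vee) = 0 mod n (n >= 1) *)
Lemma nco_ex (n : nat) (q : int) :
  exists m : nat, (0 < m)%N && ((n.+1)%:Z %| m%:Z * q)%Z.
Proof. by exists n.+1; rewrite /= dvdz_mulr. Qed.

Definition nco (n : nat) (q : int) : nat :=
  if n is n'.+1 then ex_minn (nco_ex n' q) else 1%N.

Definition in_YQn (r : nat) (n : nat) (Q : lat r -> int) (y : lat r) : Prop :=
  forall y' : lat r, (n%:Z %| bilQ Q y y')%Z.

Definition twisted_simply_connected (r : nat) (I : finType) (n : nat)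
  (Q : lat r -> int) (ac : I -> lat r) : Prop :=
  forall y : lat r, in_YQn n Q y ->
    exists c : I -> int, y = \sum_(i : I) c i *: ((nco n (Q (ac i)))%:Z *: ac i).

(* <lambda + rho^vee, a> for a simple root a, using <rho^vee, a> = 1     *)
Definition pairrho (r : nat) (lam al : lat r) : int := dpair lam al + 1.

Definition dotref (r : nat) (ac al : lat r) (lam : lat r) : lat r :=
  lam - pairrho lam al *: ac.

(* Relations of Z_{tau,g}: any commutative ring R with tau invertible and *)
(* g : Z -> R satisfying the defining relations.                          *)
Definition ztaug_rel (R : comNzRingType) (n : nat) (tau : R) (g : int -> R) : Prop :=
  [/\ (exists tau_inv : R, tau * tau_inv = 1),
      (forall k l : int, (k == l %[mod n%:Z])%Z -> g k = g l),
      (forall k : int, (k != 0 %[mod n%:Z])%Z -> g k * g (- k) = tau ^+ 2) &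
      g 0 = -1].

Definition Yb (R : ringType) (r : nat) (mu : lat r) : {malg R[lat r]} := << mu >>.

Definition Tbasis (R : comNzRingType) (tau : R) (g : int -> R) (n : nat) (r : nat)
  (Q : lat r -> int) (ac al : lat r) (lam : lat r) : {malg R[lat r]} :=
  let m := nco n (Q ac) in
  let N := dpair lam al in
  let gg := g (pairrho lam al * Q ac) in
  if 0 <= N then
    gg *: Yb R (dotref ac al lam)
    + (tau ^+ 2 - 1) *: \sum_(k < `|N|.+1 | (k * m <= `|N|)%N)
                            Yb R (lam - (k * m)%:Z *: ac)
  else
    gg *: Yb R (dotref ac al lam)
    + (1 - tau ^+ 2) *: \sum_(k < `|N|.+1 | (0 < k)%N && (k * m < `|N|)%N)
                            Yb R (lam + (k * m)%:Z *: ac).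

(* linear extension: the operator T~_a on R[Y] (written on the right) *)
Definition Tmeta (R : comNzRingType) (tau : R) (g : int -> R) (n : nat) (r : nat)
  (Q : lat r -> int) (ac al : lat r) (f : {malg R[lat r]}) : {malg R[lat r]} :=
  \sum_(mu <- msupp f) f@_mu *: Tbasis tau g n Q ac al mu.

(* Main.v *)
Require Import Defs.
From HB Require Import structures.
From mathcomp Require Import all_boot all_order all_algebra.
From mathcomp Require Import finmap.
From mathcomp.multinomials Require Import monalg.
From mathcomp Require Import zify ring.
Import Order.TTheory GRing.Theory Num.Theory.
Local Open Scope ring_scope.

Lemma sum_cut (V : zmodType) (M K : nat) (P : pred nat) (G : nat -> V) :
  (K <= M)%N -> (forall i, (i < M)%N -> P i = (i < K)%N) ->
  \sum_(i < M | P i) G i = \sum_(i < K) G i.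
Proof.
move=> KM HP; rewrite (@big_ord_widen_cond _ _ _ K M xpredT G KM) /=.
by apply: eq_bigl => i; rewrite HP.
Qed.

Lemma sum_pos (V : zmodType) (M m : nat) (F : nat -> V) : (0 < m)%N ->
  \sum_(k < M.+1 | (k * m <= M)%N) F k = \sum_(k < (M %/ m).+1) F k.
Proof.
move=> m0; apply: (@sum_cut V M.+1 (M %/ m).+1 (fun k => (k * m <= M)%N) F) => [|i _]; first by rewrite ltnS leq_div.
by rewrite ltnS leq_divRL.
Qed.

Lemma sum_neg (V : zmodType) (M m : nat) (F : nat -> V) : (0 < m)%N ->
  \sum_(k < M.+2 | (0 < k)%N && (k * m < M.+1)%N) F k = \sum_(k < M %/ m) F k.+1.
Proof.
move=> m0; rewrite big_mkcond big_ord_recl /= add0r.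
rewrite -(@sum_cut V M.+1 (M %/ m) (fun i => (i.+1 * m < M.+1)%N) (fun i => F i.+1)).
- by rewrite [RHS]big_mkcond.
- by apply: leqW; apply: leq_div.
- by move=> i _; rewrite /= ltnS -leq_divRL.
Qed.

Lemma sum_rev (V : zmodType) K (F : nat -> V) :
  \sum_(k < K) F k = \sum_(k < K) F (K - k.+1)%N.
Proof. by rewrite -(big_mkord xpredT F) big_rev_mkord subn0. Qed.

Lemma divK (m k x : nat) : (0 < m)%N -> (x < m)%N -> ((k * m + x) %/ m = k)%N.
Proof. by move=> m0 xm; rewrite divnMDl // divn_small ?addn0. Qed.

Lemma nco_pos n q : (0 < n)%N -> (0 < nco n q)%N.
Proof. by case: n => // n _ /=; case: ex_minnP => m /andP[]. Qed.

Lemma nco_dvd n q : (0 < n)%N -> (n%:Z %| (nco n q)%:Z * q)%Z.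
Proof. by case: n => // n _ /=; case: ex_minnP => m /andP[]. Qed.

Lemma nco_min n q (t : nat) : (0 < n)%N -> (n%:Z %| t%:Z * q)%Z -> (nco n q %| t)%N.
Proof.
case: n => // n _ /= ht; case: ex_minnP => m /andP[m0 hm] hmin.
rewrite /dvdn; case: eqP => // /eqP hr.
have rp : (0 < t %% m)%N by rewrite lt0n.
have : (m <= t %% m)%N.
  apply: hmin; rewrite rp /=.
  have -> : (t %% m)%N%:Z * q = t%:Z * q - (t %/ m)%N%:Z * (m%:Z * q).
    have e : t%:Z = (t %/ m)%N%:Z * m%:Z + (t %% m)%N%:Z.
      by rewrite {1}(divn_eq t m) PoszD PoszM.
    rewrite e; ring.
  by rewrite rpredB // dvdz_mull.
by rewrite leqNgt ltn_pmod.
Qed.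

Section Alg.
Variables (R : comNzRingType) (V : lmodType R) (f : V -> R).
Hypothesis fD : forall x y, f (x + y) = f x + f y.
Hypothesis fZ : forall c x, f (c *: x) = c * f x.

Lemma f0 : f 0 = 0.
Proof. by rewrite -(scale0r 0) fZ mul0r. Qed.
Lemma fN x : f (- x) = - f x.
Proof. by rewrite -scaleN1r fZ mulN1r. Qed.
Lemma fB x y : f (x - y) = f x - f y.
Proof. by rewrite fD fN. Qed.

Lemma alg2 (z0 z1 : V) (g1 g2 tau : R) : g1 * g2 = tau ^+ 2 ->
  f (g1 *: z1 + (tau ^+ 2 - 1) *: z0 - g1 *: (g2 *: z0 + (1 - tau ^+ 2) *: 0)) =
  f (- (z0 - g1 *: z1)).
Proof. move=> H; rewrite !(fD, fB, fN, fZ, f0) -H; ring. Qed.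
Lemma alg1a (z0 : V) (tau : R) :
  f (-1 *: z0 + (1 - tau ^+ 2) *: 0 + (-1 *: z0 + (1 - tau ^+ 2) *: 0)) = f (- (z0 + z0)).
Proof. rewrite !(fD, fB, fN, fZ, f0); ring. Qed.
Lemma alg1b (z0 zJ S : V) (tau : R) :
  f (-1 *: zJ + (tau ^+ 2 - 1) *: S + (-1 *: z0 + (1 - tau ^+ 2) *: S)) = f (- (z0 + zJ)).
Proof. rewrite !(fD, fB, fN, fZ, f0); ring. Qed.
Lemma alg3 (z0 zJ zr zK B C : V) (g1 g2 tau : R) : g1 * g2 = tau ^+ 2 ->
  f (g1 *: zJ + (tau ^+ 2 - 1) *: (z0 + C + zK)
     - g1 *: (g2 *: z0 + (1 - tau ^+ 2) *: B)
     - g1 *: (g2 *: zK + (tau ^+ 2 - 1) *: B)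
     + (g1 *: zr + (1 - tau ^+ 2) *: C)) =
  f (- (z0 - g1 *: zJ - g1 *: zr + zK)).
Proof. move=> H; rewrite !(fD, fB, fN, fZ, f0) -H; ring. Qed.
End Alg.

Section Lin.
Variables (R : comNzRingType) (tau : R) (g : int -> R) (n r : nat)
  (Q : lat r -> int) (ac al : lat r).

Lemma Tmeta_w (f : {malg R[lat r]}) (d : {fset lat r}) : (msupp f `<=` d)%fset ->
  Tmeta tau g n Q ac al f = \sum_(mu <- d) f@_mu *: Tbasis tau g n Q ac al mu.
Proof.
move=> sub; rewrite /Tmeta. 
apply: (big_fset_incl _ sub) => x _.
by move/mcoeff_outdom => ->; rewrite scale0r.
Qed.

Lemma Tmeta_lin c f h : Tmeta tau g n Q ac al (c *: f + h) =
   c *: Tmeta tau g n Q ac al f + Tmeta tau g n Q ac al h.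
Proof.
set d := (msupp f `|` msupp h)%fset.
have s1 : (msupp (c *: f + h) `<=` d)%fset.
  apply: fsubset_trans (msuppD_le _ _) _; apply: fsetUSS => //; exact: msuppZ_le.
have s2 : (msupp f `<=` d)%fset by exact: fsubsetUl.
have s3 : (msupp h `<=` d)%fset by exact: fsubsetUr.
rewrite (@Tmeta_w _ _ s1) (@Tmeta_w _ _ s2) (@Tmeta_w _ _ s3).
rewrite scaler_sumr -big_split /=; apply: eq_bigr => mu _.
by rewrite mcoeffD mcoeffZ scalerDl scalerA.
Qed.
Lemma TmetaD f h : Tmeta tau g n Q ac al (f + h) = Tmeta tau g n Q ac al f + Tmeta tau g n Q ac al h.
Proof. by move: (Tmeta_lin 1 f h); rewrite !scale1r. Qed.

Lemma Tmeta0 : Tmeta tau g n Q ac al 0 = 0.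
Proof. by rewrite /Tmeta msupp0 big_seq_fset0. Qed.

Lemma TmetaZ c f : Tmeta tau g n Q ac al (c *: f) = c *: Tmeta tau g n Q ac al f.
Proof. by rewrite -[c *: f]addr0 Tmeta_lin Tmeta0 addr0. Qed.

Lemma TmetaN f : Tmeta tau g n Q ac al (- f) = - Tmeta tau g n Q ac al f.
Proof. by rewrite -scaleN1r TmetaZ scaleN1r. Qed.

Lemma TmetaB f h : Tmeta tau g n Q ac al (f - h) = Tmeta tau g n Q ac al f - Tmeta tau g n Q ac al h.
Proof. by rewrite TmetaD TmetaN. Qed.

Lemma TmetaY mu : Tmeta tau g n Q ac al (Yb R mu) = Tbasis tau g n Q ac al mu.
Proof.
have s : (msupp (Yb R mu) `<=` [fset mu])%fset by exact: msuppU_le.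
rewrite (@Tmeta_w _ _ s) big_seq_fset1.
by rewrite /Yb mcoeffUU scale1r.
Qed.
Lemma Tcomb4 A B C D c1 c2 : Tmeta tau g n Q ac al (A - c1 *: B - c2 *: C + D) =
  Tmeta tau g n Q ac al A - c1 *: Tmeta tau g n Q ac al B - c2 *: Tmeta tau g n Q ac al C
  + Tmeta tau g n Q ac al D.
Proof. by rewrite TmetaD TmetaB TmetaB TmetaZ TmetaZ. Qed.
End Lin.

Lemma dpairB r (y x z : lat r) (t : int) : dpair (y - t *: x) z = dpair y z - t * dpair x z.
Proof. by rewrite /dpair mulmxBl -scalemxAl !mxE. Qed.

Section Lat.
Variables (R : comNzRingType) (tau : R) (g : int -> R) (n r : nat)
  (Q : lat r -> int) (ac al lam : lat r).
Hypothesis H2 : dpair ac al = 2.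
Hypothesis Hm : (0 < nco n (Q ac))%N.

Lemma latE (x y : int) : x = y -> Yb R (lam - x *: ac) = Yb R (lam - y *: ac).
Proof. by move=> ->. Qed.

Lemma dotrefZ (t : int) : dotref ac al (lam - t *: ac) = lam - (pairrho lam al - t) *: ac.
Proof.
rewrite /dotref /pairrho dpairB H2 -addrA -opprD -scalerDl; congr (_ - _ *: _).
lia.
Qed.

Lemma TbZpos (t M : nat) : pairrho lam al = (2*t + M + 1)%N%:Z ->
  Tbasis tau g n Q ac al (lam - t%:Z *: ac) =
   g ((M.+1)%:Z * Q ac) *: Yb R (lam - (pairrho lam al - t%:Z) *: ac)
   + (tau ^+ 2 - 1) *: \sum_(k < (M %/ nco n (Q ac)).+1)
         Yb R (lam - (t + k * nco n (Q ac))%N%:Z *: ac).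
Proof.
move=> hj.
have hN : dpair (lam - t%:Z *: ac) al = M%:Z.
  by move: hj; rewrite /pairrho dpairB H2; lia.
rewrite /Tbasis -dotrefZ /= hN /pairrho hN /=.
have -> : (M%:Z + 1) = M.+1%:Z by lia.
congr (_ + _ *: _).
rewrite (@sum_pos _ M _ (fun k => Yb R (lam - t%:Z *: ac - (k * nco n (Q ac))%N%:Z *: ac))) //.
apply: eq_bigr => k _; rewrite -addrA -opprD -scalerDl; congr (Yb R (_ - _ *: _)); lia.
Qed.

Lemma TbZneg (t M : nat) : pairrho lam al + M%:Z = (2*t)%N%:Z ->
  Tbasis tau g n Q ac al (lam - t%:Z *: ac) =
   g (- M%:Z * Q ac) *: Yb R (lam - (pairrho lam al - t%:Z) *: ac)
   + (1 - tau ^+ 2) *: \sum_(k < M %/ nco n (Q ac))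
         Yb R (lam - (t%:Z - (k.+1 * nco n (Q ac))%N%:Z) *: ac).
Proof.
move=> hj.
have hN : dpair (lam - t%:Z *: ac) al = - (M.+1)%:Z.
  by move: hj; rewrite /pairrho dpairB H2; lia.
rewrite /Tbasis -dotrefZ /= hN /pairrho hN /=.
have -> : (- (M.+1)%:Z + 1) = - M%:Z by lia.
congr (_ + _ *: _).
rewrite (@sum_neg _ M _ (fun k => Yb R (lam - t%:Z *: ac + (k * nco n (Q ac))%N%:Z *: ac))) //.
apply: eq_bigr => k _; rewrite -addrA -scaleNr -scalerDl -[in RHS]scaleNr; congr (Yb R (lam + _ *: ac)); lia.
Qed.
End Lat.

Fact zt_key : unit. Proof. exact: tt. Qed.
Definition Zt (R : comNzRingType) r (lam ac : lat r) (t : int) : {malg R[lat r]} :=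
  locked_with zt_key (Yb R (lam - t *: ac)).
Arguments Zt R {r}.

Lemma ZtE (R : comNzRingType) r (lam ac : lat r) t : Zt R lam ac t = Yb R (lam - t *: ac).
Proof. by rewrite /Zt unlock. Qed.


Section Lat2.
Variables (R : comNzRingType) (tau : R) (g : int -> R) (n r : nat)
  (Q : lat r -> int) (ac al lam : lat r).
Hypothesis H2 : dpair ac al = 2.
Hypothesis Hm : (0 < nco n (Q ac))%N.

Lemma TZpos (t M : nat) : pairrho lam al = (2*t + M + 1)%N%:Z ->
  Tmeta tau g n Q ac al (Zt R lam ac t%:Z) =
   g ((M.+1)%:Z * Q ac) *: Zt R lam ac (pairrho lam al - t%:Z)
   + (tau ^+ 2 - 1) *: \sum_(k < (M %/ nco n (Q ac)).+1)
         Zt R lam ac ((t + k * nco n (Q ac))%N%:Z).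
Proof.
move=> hj; rewrite !ZtE TmetaY (@TbZpos R tau g n r Q ac al lam H2 Hm t M hj).
by congr (_ + _ *: _); apply: eq_bigr => k _; rewrite ZtE.
Qed.

Lemma TZneg (t M : nat) : pairrho lam al + M%:Z = (2*t)%N%:Z ->
  Tmeta tau g n Q ac al (Zt R lam ac t%:Z) =
   g (- M%:Z * Q ac) *: Zt R lam ac (pairrho lam al - t%:Z)
   + (1 - tau ^+ 2) *: \sum_(k < M %/ nco n (Q ac))
         Zt R lam ac (t%:Z - (k.+1 * nco n (Q ac))%N%:Z).
Proof.
move=> hj; rewrite !ZtE TmetaY (@TbZneg R tau g n r Q ac al lam H2 Hm t M hj).
by congr (_ + _ *: _); apply: eq_bigr => k _; rewrite ZtE.
Qed.
End Lat2.

Theorem mainTheorem2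
  (R : comNzRingType) (tau : R) (g : int -> R) (n : nat)
  (r : nat) (I : finType) (ac al : I -> lat r) (Q : lat r -> int)
  (n_pos : (0 < n)%N)
  (Hring : ztaug_rel n tau g)
  (Hcartan : finite_type_cartan (cartan ac al))
  (HQ : quadratic_form Q)
  (HW : W_invariant ac al Q)
  (Hsc : twisted_simply_connected n Q ac)
  (lam : lat r) (a : I) :
  let m : nat := nco n (Q (ac a)) in
  let j : int := pairrho lam (al a) in
  let T := Tmeta tau g n Q (ac a) (al a) in
  let Yl := Yb R lam in
  let Yls := Yb R (dotref (ac a) (al a) lam) in
  [/\ (* (1) *)
      (0 <= j -> (j == 0 %[mod m%:Z])%Z ->
         T (Yl + Yls) = - (Yl + Yls)),
      (* (2) *)
      (0 < j -> j < m%:Z ->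
         let gg := g (j * Q (ac a)) in
         T (Yl - gg *: Yls) = - (Yl - gg *: Yls)) &
      (* (3) *)
      (m%:Z < j -> (j != 0 %[mod m%:Z])%Z ->
         let lam1 := lam - (j %% m%:Z)%Z *: ac a in
         let gg := g (j * Q (ac a)) in
         let u := Yl - gg *: Yls - gg *: Yb R lam1
                  + Yb R (dotref (ac a) (al a) lam1) in
         T u = - u)].
Proof.
move=> m j T Yl Yls.
have H2 : dpair (ac a) (al a) = 2 by case: Hcartan => h _ _ _; exact: h a.
have m0 : (0 < m)%N := @nco_pos n (Q (ac a)) n_pos.
case: Hring => _ gmod ginv g0.
have gcong : forall x y : int, (m%:Z %| x - y)%Z -> g (x * Q (ac a)) = g (y * Q (ac a)).
  move=> x y /dvdzP [c hc]; apply: gmod; rewrite eqz_mod_dvd -mulrBl hc -mulrA.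
  by apply: dvdz_mull; apply: nco_dvd.
have gzero : forall x : int, (m%:Z %| x)%Z -> g (x * Q (ac a)) = -1.
  by move=> x hx; rewrite (gcong x 0) ?subr0 // mul0r.
have gin : forall t : nat, ~~ (m %| t)%N ->
    g (t%:Z * Q (ac a)) * g (- t%:Z * Q (ac a)) = tau ^+ 2.
  move=> t ht; rewrite mulNr; apply: ginv; rewrite eqz_mod_dvd subr0.
  by apply/negP => /(@nco_min n (Q (ac a)) t n_pos) ht2; rewrite ht2 in ht.
have EYl : Yl = Zt R lam (ac a) 0%N%:Z by rewrite ZtE scale0r subr0.
have EYls : Yls = Zt R lam (ac a) j by rewrite ZtE.
split.
- move=> j0 jmod.
  have [J hJ] : exists J : nat, j = J%:Z by exists `|j|%N; lia.
  have hdiv : (m %| J)%N by move: jmod; rewrite hJ eqz_mod_dvd subr0.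
  rewrite /T EYl EYls hJ TmetaD.
  case: J hJ hdiv => [|M] hJ hdiv.
    rewrite (@TZneg _ tau g n _ Q (ac a) (al a) lam H2 m0 0 0); last by rewrite -/j hJ.
    rewrite div0n big_ord0 -/j hJ.
    have -> : 0%N%:Z - 0%N%:Z = 0%N%:Z by lia.
    rewrite gzero ?dvdz0 //.
    apply/malgP => k.
    exact: (@alg1a _ _ (mcoeff k) (@mcoeffD _ _ k) (fun c x => @mcoeffZ _ _ c x k)).
  rewrite (@TZpos _ tau g n _ Q (ac a) (al a) lam H2 m0 0 M); last by rewrite -/j hJ; lia.
  rewrite (@TZneg _ tau g n _ Q (ac a) (al a) lam H2 m0 M.+1 M.+1); last by rewrite -/j hJ; lia.
  rewrite -/m -/j hJ.
  have -> : M.+1%:Z - 0%N%:Z = M.+1%:Z by lia.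
  have -> : M.+1%:Z - M.+1%:Z = 0%N%:Z by lia.
  rewrite !gzero //.
  have [c hc] : exists c, M.+1 = (c.+1 * m)%N.
    case/dvdnP: hdiv => [[|c] hc]; first by move: hc; rewrite mul0n.
    by exists c.
  have e1 : (M %/ m)%N = c.
    have -> : M = (c * m + (m - 1))%N by move: hc; lia.
    by rewrite divnMDl // divn_small ?addn0 //; lia.
  have e2 : (M.+1 %/ m)%N = c.+1 by rewrite hc mulnK.
  rewrite e1 e2.
  have -> : \sum_(k < c.+1) Zt R lam (ac a) (M.+1%:Z - (k.+1 * m)%N%:Z) =
            \sum_(k < c.+1) Zt R lam (ac a) ((0 + k * m)%N%:Z).
    rewrite (@sum_rev _ c.+1 (fun k => Zt R lam (ac a) (M.+1%:Z - (k.+1 * m)%N%:Z))); apply: eq_bigr => k _.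
    have hk := ltn_ord k.
    congr (Zt R lam (ac a) _).
    have -> : ((c.+1 - k.+1).+1 = c.+1 - k)%N by lia.
    have hkm : (k * m <= M.+1)%N by rewrite hc; apply: leq_mul => //; exact: ltnW.
    rewrite mulnBl -hc; lia.
  apply/malgP => k.
  exact: (@alg1b _ _ (mcoeff k) (@mcoeffD _ _ k) (fun c x => @mcoeffZ _ _ c x k)).
- move=> jp jm gg.
  have [M hJ] : exists M : nat, j = (M.+1)%:Z.
    by exists (`|j|.-1)%N; lia.
  rewrite /T EYl EYls /gg hJ TmetaB TmetaZ.
  rewrite (@TZpos _ tau g n _ Q (ac a) (al a) lam H2 m0 0 M); last by rewrite -/j hJ; lia.
  rewrite (@TZneg _ tau g n _ Q (ac a) (al a) lam H2 m0 M.+1 M.+1); last by rewrite -/j hJ; lia.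
  rewrite -/m -/j hJ.
  rewrite (@divn_small M m) ?(@divn_small M.+1 m) ?big_ord1 ?big_ord0; try lia.
  have -> : M.+1%:Z - 0%N%:Z = M.+1%:Z by lia.
  have -> : M.+1%:Z - M.+1%:Z = 0%N%:Z by lia.
  have -> : (0 + @nat_of_ord 1 ord0 * m)%N%:Z = 0%N%:Z by rewrite mul0n.
  have hd : ~~ (m %| M.+1)%N.
    by apply/negP => /(dvdn_leq (ltn0Sn M)); lia.
  apply/malgP => k.
  exact: (@alg2 _ _ (mcoeff k) (@mcoeffD _ _ k) (fun c x => @mcoeffZ _ _ c x k) _ _ _ _ _ (gin _ hd)).
move=> jm jnd lam1 gg u.
have [M hJ] : exists M : nat, j = (M.+1)%:Z.
  by exists (`|j|.-1)%N; lia.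
have hnd : ~~ (m %| M.+1)%N by move: jnd; rewrite hJ eqz_mod_dvd subr0.
have [rho [K' [hrho [hK [hr0 hrm]]]]] : exists rho K', (j %% m%:Z)%Z = rho%:Z /\
    M.+1 = (K'.+1 * m + rho)%N /\ (0 < rho)%N /\ (rho < m)%N.
  exists (M.+1 %% m)%N, (M.+1 %/ m).-1; split; first by rewrite hJ modz_nat.
  have hq : (0 < M.+1 %/ m)%N.
    rewrite divn_gt0 //; move: jm; rewrite hJ; lia.
  split; first by rewrite prednK // -divn_eq.
  split; last by rewrite ltn_pmod.
  by move: hnd; rewrite /dvdn lt0n.
have E1 : Yb R lam1 = Zt R lam (ac a) rho%:Z by rewrite ZtE /lam1 hrho.
have E2 : Yb R (dotref (ac a) (al a) lam1) = Zt R lam (ac a) (j - rho%:Z).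
  by rewrite ZtE /lam1 hrho (@dotrefZ n r Q (ac a) (al a) lam H2 m0).
have hP : pairrho lam (al a) = M.+1%:Z := hJ.
have Eu : u = Zt R lam (ac a) 0%N%:Z - g (M.+1%:Z * Q (ac a)) *: Zt R lam (ac a) M.+1%:Z
              - g (M.+1%:Z * Q (ac a)) *: Zt R lam (ac a) rho%:Z + Zt R lam (ac a) (K'.+1 * m)%N%:Z.
  have -> : (K'.+1 * m)%N%:Z = j - rho%:Z by lia.
  by rewrite -hJ /u -E2 -E1 -EYls -EYl.
rewrite Eu /T.
rewrite Tcomb4.
rewrite (@TZpos _ tau g n _ Q (ac a) (al a) lam H2 m0 0 M); last by rewrite hP; lia.
rewrite (@TZneg _ tau g n _ Q (ac a) (al a) lam H2 m0 M.+1 M.+1); last by rewrite hP; lia.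
rewrite (@TZpos _ tau g n _ Q (ac a) (al a) lam H2 m0 rho (K' * m + (m - rho.+1))%N); last by rewrite hP; lia.
rewrite (@TZneg _ tau g n _ Q (ac a) (al a) lam H2 m0 (K'.+1 * m)%N (K' * m + (m - rho))%N); last by rewrite hP; lia.
rewrite -/m hP.
have -> : M.+1%:Z - 0%N%:Z = M.+1%:Z by lia.
have -> : M.+1%:Z - M.+1%:Z = 0%N%:Z by lia.
have -> : M.+1%:Z - rho%:Z = (K'.+1 * m)%N%:Z by lia.
have -> : M.+1%:Z - (K'.+1 * m)%N%:Z = rho%:Z by lia.
have -> : (M %/ m = K'.+1)%N.
  have -> : M = (K'.+1 * m + rho.-1)%N by lia.
  rewrite divK //; lia.
have -> : (M.+1 %/ m = K'.+1)%N by rewrite hK divK.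
have -> : ((K' * m + (m - rho.+1)) %/ m = K')%N by rewrite divK //; lia.
have -> : ((K' * m + (m - rho)) %/ m = K')%N by rewrite divK //; lia.
rewrite (gcong ((K' * m + (m - rho.+1)).+1%:Z) (- M.+1%:Z)); last first.
  by apply/dvdzP; exists (2 * K'.+1)%N%:Z; lia.
rewrite (gcong (- (K' * m + (m - rho))%N%:Z) (M.+1%:Z)); last first.
  by apply/dvdzP; exists (- (2 * K'.+1)%N%:Z); lia.
have eA : \sum_(k < K'.+2) Zt R lam (ac a) ((0 + k * m)%N%:Z) =
    Zt R lam (ac a) 0%N%:Z + \sum_(k < K') Zt R lam (ac a) ((k.+1 * m)%N%:Z)
    + Zt R lam (ac a) ((K'.+1 * m)%N%:Z).
  rewrite big_ord_recl big_ord_recr /= addrA; congr (_ + _ + _).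
  all: try done.
have eB : \sum_(k < K'.+1) Zt R lam (ac a) (M.+1%:Z - (k.+1 * m)%N%:Z) =
          \sum_(k < K'.+1) Zt R lam (ac a) ((rho + k * m)%N%:Z).
  rewrite (@sum_rev _ K'.+1 (fun k => Zt R lam (ac a) (M.+1%:Z - (k.+1 * m)%N%:Z))).
  apply: eq_bigr => k _.
  have hk := ltn_ord k.
  congr (Zt R lam (ac a) _).
  have -> : ((K'.+1 - k.+1).+1 = K'.+1 - k)%N by lia.
  have hkm : (k * m <= K'.+1 * m)%N by apply: leq_mul => //; exact: ltnW.
  rewrite mulnBl; lia.
have eC : \sum_(k < K') Zt R lam (ac a) ((K'.+1 * m)%N%:Z - (k.+1 * m)%N%:Z) =
          \sum_(k < K') Zt R lam (ac a) ((k.+1 * m)%N%:Z).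
  rewrite (@sum_rev _ K' (fun k => Zt R lam (ac a) ((K'.+1 * m)%N%:Z - (k.+1 * m)%N%:Z))).
  apply: eq_bigr => k _.
  have hk := ltn_ord k.
  congr (Zt R lam (ac a) _).
  have -> : ((K' - k.+1).+1 = K' - k)%N by lia.
  have hkm : (k * m <= K' * m)%N by apply: leq_mul => //; exact: ltnW.
  rewrite mulnBl; lia.
rewrite eA eB eC.
have hg : g (M.+1%:Z * Q (ac a)) * g (- M.+1%:Z * Q (ac a)) = tau ^+ 2 by apply: gin.
apply/malgP => k.
exact: (@alg3 _ _ (mcoeff k) (@mcoeffD _ _ k) (fun c x => @mcoeffZ _ _ c x k) _ _ _ _ _ _ _ _ _ hg).
Qed.
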